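(* Let $(\delta_n)_{n\ge1}$ be real numbers with $1<\delta_n\to\infty$. Then there exist a nontrivial centralizer $\Omega:\ell_2\to\omega$, numbers $\kappa(n)$ with $\kappa(n)\le\delta_n$ for all $n$ and $\kappa(n)\to\infty$, and a sequence $(a_n)_{n=1}^\infty\subseteq\ell_2$ of non-null vectors with $\operatorname{supp}a_n\subseteq\{1,\dots,n\}$ such that $$\Omega(a_n)=-2a_n\cdot\log\kappa(n)\quad\text{for all }n.$$
   Context: $\omega$ denotes the space of all complex sequences. A centralizer on $\ell_2$ is a (homogeneous) map $\Omega:\ell_2\to\omega$ for which there is $C>0$ with $\Omega(ab)-a\Omega(b)\in\ell_2$ and $\|\Omega(ab)-a\Omega(b)\|_{\ell_2}\le C\|a\|_\infty\|b\|_{\ell_2}$ for all $a\in\ell_\infty$, $b\in\ell_2$ (coordinatewise products). $\Omega$ is trivial if there is a linear (possibly unbounded) map $L:\ell_2\to\omega$ with $\sup_{\|x\|_{\ell_2}\le1}\|\Omega(x)-L(x)\|_{\ell_2}<\infty$, and nontrivial otherwise. *)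

(* Defs.v *)
From Stdlib Require Import Reals.
From Coquelicot Require Import Coquelicot.
Open Scope R_scope.

(* omega: the space of all complex sequences (indexed by nat, starting at 0) *)
Definition seqC := nat -> C.

Definition sadd (x y : seqC) : seqC := fun k => Cplus (x k) (y k).
Definition ssub (x y : seqC) : seqC := fun k => Cminus (x k) (y k).
Definition smul (x y : seqC) : seqC := fun k => Cmult (x k) (y k).
Definition sscal (l : C) (x : seqC) : seqC := fun k => Cmult l (x k).

Definition in_l2 (x : seqC) : Prop := ex_series (fun k => (Cmod (x k))^2).
Definition l2norm (x : seqC) : R := sqrt (Series (fun k => (Cmod (x k))^2)).

Definition in_linf (a : seqC) : Prop := exists M : R, forall k, Cmod (a k) <= M.
Definition linfnorm (a : seqC) : R := real (Sup_seq (fun k => Cmod (a k))).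

Definition homogeneous (Om : seqC -> seqC) : Prop :=
  forall (l : C) (x : seqC), in_l2 x -> forall k, Om (sscal l x) k = Cmult l (Om x k).

Definition centralizer (Om : seqC -> seqC) : Prop :=
  homogeneous Om /\
  exists Cst : R, 0 < Cst /\
    forall a b : seqC, in_linf a -> in_l2 b ->
      in_l2 (ssub (Om (smul a b)) (smul a (Om b))) /\
      l2norm (ssub (Om (smul a b)) (smul a (Om b))) <= Cst * linfnorm a * l2norm b.

Definition linear_on_l2 (L : seqC -> seqC) : Prop :=
  (forall x y, in_l2 x -> in_l2 y -> forall k, L (sadd x y) k = Cplus (L x k) (L y k)) /\
  (forall (l : C) x, in_l2 x -> forall k, L (sscal l x) k = Cmult l (L x k)).

Definition trivial_centralizer (Om : seqC -> seqC) : Prop :=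
  exists L : seqC -> seqC, linear_on_l2 L /\
    exists K : R, forall x, in_l2 x -> l2norm x <= 1 ->
      in_l2 (ssub (Om x) (L x)) /\ l2norm (ssub (Om x) (L x)) <= K.

Definition nontrivial_centralizer (Om : seqC -> seqC) : Prop :=
  centralizer Om /\ ~ trivial_centralizer Om.

(* Main.v *)
Require Import Defs.
From Stdlib Require Import Reals Lra Lia Psatz FunctionalExtensionality.
From Coquelicot Require Import Coquelicot.
Open Scope R_scope.

Fixpoint fsum (f : nat -> R) (n : nat) : R :=
  match n with O => 0 | S p => fsum f p + f p end.

Lemma fsum_sum_n f n : fsum f (S n) = sum_n f n.
Proof.
  rewrite sum_n_Reals. induction n; simpl in *. lra. rewrite <- IHn. simpl. lra.
Qed.

Lemma fsum_ext f g n : (forall k, (k < n)%nat -> f k = g k) -> fsum f n = fsum g n.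
Proof. induction n; intros H; simpl. auto. rewrite IHn, H; auto. Qed.

Lemma fsum_plus f g n : fsum (fun k => f k + g k) n = fsum f n + fsum g n.
Proof. induction n; simpl; lra. Qed.

Lemma fsum_scal c f n : fsum (fun k => c * f k) n = c * fsum f n.
Proof. induction n; simpl. ring. rewrite IHn. ring. Qed.

Lemma fsum_nonneg f n : (forall k, 0 <= f k) -> 0 <= fsum f n.
Proof. intros H; induction n; simpl. lra. specialize (H n). lra. Qed.

Lemma fsum_le f g n : (forall k, (k < n)%nat -> f k <= g k) -> fsum f n <= fsum g n.
Proof. induction n; intros H; simpl. lra. assert (H1 := H n (Nat.lt_succ_diag_r n)).
  assert (fsum f n <= fsum g n) by (apply IHn; intros; apply H; lia). lra. Qed.

Lemma fsum_const c n : fsum (fun _ => c) n = INR n * c.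
Proof. induction n; simpl fsum. simpl; ring. rewrite IHn, S_INR. ring. Qed.

Lemma fsum_term f n i : (forall k, 0 <= f k) -> (i < n)%nat -> f i <= fsum f n.
Proof.
  intros H; induction n; intros Hi. lia. simpl.
  destruct (Nat.eq_dec i n). subst. assert (0 <= fsum f n) by (apply fsum_nonneg; auto). lra.
  assert (f i <= fsum f n) by (apply IHn; lia). specialize (H n). lra.
Qed.

Lemma fsum_stable f n j : (forall k, (n <= k)%nat -> f k = 0) -> fsum f (n + j) = fsum f n.
Proof.
  intros H; induction j. rewrite Nat.add_0_r; auto.
  rewrite Nat.add_succ_r. simpl. rewrite IHj, H by lia. ring.
Qed.

Lemma is_series_fin f n : (forall k, (n <= k)%nat -> f k = 0) -> is_series f (fsum f n).
Proof.
  intros H.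
  assert (is_lim_seq (sum_n f) (fsum f n)).
  { apply is_lim_seq_ext_loc with (fun _ => fsum f n). 2: apply is_lim_seq_const.
    exists n. intros m Hm. rewrite <- fsum_sum_n.
    replace (S m) with (n + (S m - n))%nat by lia. rewrite fsum_stable; auto. }
  exact H0.
Qed.

Lemma Series_fin f n : (forall k, (n <= k)%nat -> f k = 0) -> ex_series f /\ Series f = fsum f n.
Proof.
  intros H. pose proof (is_series_fin f n H). split. eexists; eauto.
  apply is_series_unique; auto.
Qed.

Lemma Series_nonneg f : (forall k, 0 <= f k) -> ex_series f -> 0 <= Series f.
Proof.
  intros H He. assert (Series (fun _ => 0) = 0).
  { apply is_series_unique. apply (is_series_fin _ 0). auto. }
  rewrite <- H0. apply Series_le; auto. intros; split; [lra| auto].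
Qed.

Lemma fsum_le_Series f n : (forall k, 0 <= f k) -> ex_series f -> fsum f n <= Series f.
Proof.
  intros H He. destruct n. simpl. apply Series_nonneg; auto.
  rewrite (Series_incr_n f (S n)) by (auto; lia). simpl Init.Nat.pred.
  rewrite fsum_sum_n, sum_n_Reals.
  assert (0 <= Series (fun k => f (S n + k)%nat)). apply Series_nonneg; auto.
  apply (ex_series_incr_n f (S n)) in He. exact He. lra.
Qed.

Definition N2 (x : seqC) : R := Series (fun k => Cmod (x k) ^ 2).
Definition KP (x : seqC) : seqC := fun k => Cmult (x k) (RtoC (2 * ln (Cmod (x k) ^ 2 / N2 x))).

Ltac Ceq := apply injective_projections; simpl; ring.

Lemma Cmod2 z : Cmod z ^ 2 = fst z ^ 2 + snd z ^ 2.
Proof. apply Cmod2_alt. Qed.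

Lemma term_le_N2 x k : in_l2 x -> Cmod (x k) ^ 2 <= N2 x.
Proof.
  intros H. unfold N2. eapply Rle_trans. 2: apply fsum_le_Series; auto.
  2: intros; apply pow2_ge_0.
  apply (fsum_term (fun k => Cmod (x k) ^ 2) (S k) k). intros; apply pow2_ge_0. lia.
Qed.

Lemma N2_nonneg x : in_l2 x -> 0 <= N2 x.
Proof. intros H. apply Series_nonneg; auto. intros; apply pow2_ge_0. Qed.

Lemma N2_scal l x : N2 (sscal l x) = Cmod l ^ 2 * N2 x.
Proof. unfold N2, sscal. rewrite <- Series_scal_l. apply Series_ext; intro.
  rewrite Cmod_mult. ring. Qed.

Lemma KP_hom : homogeneous KP.
Proof.
  intros l x Hx k. unfold KP.
  destruct (Req_dec (Cmod (x k)) 0) as [H0|H0].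
  { apply Cmod_eq_0 in H0. unfold sscal. rewrite H0. Ceq. }
  destruct (Req_dec (Cmod l) 0) as [H1|H1].
  { apply Cmod_eq_0 in H1. unfold sscal. rewrite H1. Ceq. }
  assert (Hc : 0 < Cmod (x k)) by (pose proof (Cmod_ge_0 (x k)); lra).
  assert (Hl : 0 < Cmod l) by (pose proof (Cmod_ge_0 l); lra).
  assert (HN : 0 < N2 x). { pose proof (term_le_N2 x k Hx). nra. }
  rewrite N2_scal. assert (E : Cmod (sscal l x k) = Cmod l * Cmod (x k)) by (unfold sscal; apply Cmod_mult). rewrite E.
  replace ((Cmod l * Cmod (x k)) ^ 2 / (Cmod l ^ 2 * N2 x)) with (Cmod (x k) ^ 2 / N2 x)
    by (field; lra).
  Ceq.
Qed.

Lemma linf_bound a : in_linf a -> forall k, Cmod (a k) <= linfnorm a.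
Proof.
  intros [M HM] k. unfold linfnorm.
  pose proof (Sup_seq_correct (fun k => Cmod (a k))) as H.
  destruct (Sup_seq (fun k => Cmod (a k))) as [r| |] eqn:E; simpl in H |- *.
  - destruct (Rle_dec (Cmod (a k)) r) as [h|h]; auto.
    assert (he : 0 < Cmod (a k) - r) by lra.
    destruct (H (mkposreal _ he)) as [H1 _]. specialize (H1 k). simpl in H1. lra.
  - destruct (H M) as [n Hn]. specialize (HM n). lra.
  - specialize (H (Cmod (a 0%nat)) 0%nat). lra.
Qed.

Lemma linf_nonneg a : in_linf a -> 0 <= linfnorm a.
Proof. intros H. eapply Rle_trans. apply (Cmod_ge_0 (a 0%nat)). apply linf_bound; auto. Qed.

Lemma ln_le x y : 0 < x -> x <= y -> ln x <= ln y.
Proof. intros H [h|h]. left; apply ln_increasing; auto. subst; lra. Qed.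

Lemma wlog_bound w : 0 < w -> w <= 1 -> w * ln w ^ 2 <= 4.
Proof.
  intros H0 H1. set (v := sqrt w).
  assert (Hv : 0 < v) by (apply sqrt_lt_R0; auto).
  assert (Hw : w = v * v) by (unfold v; rewrite sqrt_sqrt; lra).
  assert (Hv1 : v <= 1). { unfold v. rewrite <- sqrt_1. apply sqrt_le_1_alt. auto. }
  assert (Hl : ln w = 2 * ln v) by (rewrite Hw, ln_mult; auto; ring).
  set (y := - ln v).
  assert (Hy : 0 <= y). { unfold y. assert (ln v <= ln 1) by (apply ln_le; auto). rewrite ln_1 in H. lra. }
  assert (He : exp y = / v). { unfold y. rewrite exp_Ropp, exp_ln; auto. }
  pose proof (exp_ineq1_le y) as Hi. rewrite He in Hi.
  assert (v * (1 + y) <= 1). { apply (Rmult_le_compat_l v) in Hi; [|lra]. rewrite Rinv_r in Hi; lra. }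
  assert (Hvy : v * y <= 1) by nra.
  assert (w * ln w ^ 2 = 4 * (v * y) ^ 2) by (rewrite Hl, Hw; unfold y; ring).
  rewrite H2. assert (0 <= v * y) by nra. nra.
Qed.

Lemma ptw_bound al P Q A2 : 0 < al -> 0 < P -> 0 < Q -> al <= A2 -> P <= A2 * Q ->
  al * ln (al * Q / P) ^ 2 <= 4 * A2 + ln (A2 * Q / P) ^ 2 * al.
Proof.
  intros Ha HP HQ HA HPQ. set (u := al * Q / P).
  assert (Hu : 0 < u) by (unfold u; apply Rdiv_lt_0_compat; nra).
  assert (0 <= ln (A2 * Q / P) ^ 2 * al) by (apply Rmult_le_pos; [apply pow2_ge_0| lra]).
  destruct (Rle_dec u 1) as [h|h].
  - assert (al = (P / Q) * u) by (unfold u; field; lra).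
    pose proof (wlog_bound u Hu h).
    assert (P / Q <= A2). { apply Rmult_le_reg_r with Q; auto. unfold Rdiv. rewrite Rmult_assoc, Rinv_l; lra. }
    assert (0 < P / Q) by (apply Rdiv_lt_0_compat; auto).
    rewrite H0. replace (P / Q * u * ln u ^ 2) with (P / Q * (u * ln u ^ 2)) by ring. nra.
  - assert (0 < ln u). { rewrite <- ln_1. apply ln_increasing; lra. }
    assert (ln u <= ln (A2 * Q / P)). { apply ln_le; auto. unfold u. unfold Rdiv.
      apply Rmult_le_compat_r. left; apply Rinv_0_lt_compat; auto. nra. }
    assert (ln u ^ 2 <= ln (A2 * Q / P) ^ 2) by nra. nra.
Qed.

Lemma glob_bound P Q A2 : 0 < P -> P <= A2 * Q -> ln (A2 * Q / P) ^ 2 * P <= 4 * (A2 * Q).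
Proof.
  intros HP HPQ. set (w := P / (A2 * Q)).
  assert (Hw : 0 < w) by (unfold w; apply Rdiv_lt_0_compat; lra).
  assert (Hw1 : w <= 1). { unfold w. apply Rmult_le_reg_r with (A2 * Q). lra. unfold Rdiv. rewrite Rmult_assoc, Rinv_l; lra. }
  assert (A2 * Q / P = / w). { unfold w. field. repeat split; intro Z; rewrite Z in *; lra. }
  rewrite H, ln_Rinv by auto.
  assert (P = w * (A2 * Q)). { unfold w. field. repeat split; intro Z; rewrite Z in *; lra. }
  pose proof (wlog_bound w Hw Hw1).
  rewrite H0 at 1. replace ((- ln w) ^ 2 * (w * (A2 * Q))) with ((w * ln w ^ 2) * (A2 * Q)) by ring.
  apply Rmult_le_compat_r; lra.
Qed.

Lemma ex_series_comb (f g : nat -> R) c1 c2 : ex_series f -> ex_series g ->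
  ex_series (fun k => c1 * f k + c2 * g k).
Proof.
  intros Hf Hg. apply (ex_series_plus (fun k => c1 * f k) (fun k => c2 * g k));
  [apply (ex_series_scal_l c1 f Hf) | apply (ex_series_scal_l c2 g Hg)].
Qed.

Lemma ex_series_dom (f g : nat -> R) : (forall k, 0 <= f k <= g k) -> ex_series g -> ex_series f.
Proof.
  intros H Hg. apply (ex_series_le f g); auto. intros n. change (norm (f n)) with (Rabs (f n)).
  rewrite Rabs_pos_eq; apply H.
Qed.

Lemma smul_l2 a b : in_linf a -> in_l2 b -> in_l2 (smul a b).
Proof.
  intros Ha Hb. unfold in_l2.
  apply ex_series_dom with (fun k => linfnorm a ^ 2 * Cmod (b k) ^ 2 + 0 * Cmod (b k) ^ 2).
  2: apply ex_series_comb; auto.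
  intros k. unfold smul. rewrite Cmod_mult. pose proof (linf_bound a Ha k).
  pose proof (Cmod_ge_0 (a k)). pose proof (Cmod_ge_0 (b k)). split. apply pow2_ge_0.
  rewrite Rpow_mult_distr, Rmult_0_l, Rplus_0_r. apply Rmult_le_compat_r. apply pow2_ge_0.
  apply pow_incr; lra.
Qed.

Lemma N2_smul_le a b : in_linf a -> in_l2 b -> N2 (smul a b) <= linfnorm a ^ 2 * N2 b.
Proof.
  intros Ha Hb. unfold N2. rewrite <- Series_scal_l. apply Series_le.
  2: apply (ex_series_scal_l (linfnorm a ^ 2) _ Hb).
  intros k. unfold smul. rewrite Cmod_mult. pose proof (linf_bound a Ha k).
  pose proof (Cmod_ge_0 (a k)). pose proof (Cmod_ge_0 (b k)). split. apply pow2_ge_0.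
  rewrite Rpow_mult_distr. apply Rmult_le_compat_r. apply pow2_ge_0.
  apply pow_incr; lra.
Qed.

Lemma ln_ratio al be P Q : 0 < al -> 0 < be -> 0 < P -> 0 < Q ->
  2 * ln (al * be / P) - 2 * ln (be / Q) = 2 * ln (al * Q / P).
Proof.
  intros. unfold Rdiv. rewrite !ln_mult, !ln_Rinv; auto.
  ring. all: try apply Rinv_0_lt_compat; auto; try nra.

Qed.

Lemma KP_pt a b k : in_linf a -> in_l2 b ->
  let A := linfnorm a in let P := N2 (smul a b) in let Q := N2 b in
  let Lm := ln (A ^ 2 * Q / P) in
  Cmod (ssub (KP (smul a b)) (smul a (KP b)) k) ^ 2 <=
  16 * A ^ 2 * Cmod (b k) ^ 2 + 4 * Lm ^ 2 * Cmod (smul a b k) ^ 2.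
Proof.
  intros Ha Hb A P Q Lm.
  assert (R0 : 0 <= 16 * A ^ 2 * Cmod (b k) ^ 2 + 4 * Lm ^ 2 * Cmod (smul a b k) ^ 2).
  { pose proof (pow2_ge_0 A). pose proof (pow2_ge_0 (Cmod (b k))).
    pose proof (pow2_ge_0 Lm). pose proof (pow2_ge_0 (Cmod (smul a b k))). nra. }
  destruct (Req_dec (Cmod (a k)) 0) as [H0|H0].
  { apply Cmod_eq_0 in H0. replace (Cmod (ssub (KP (smul a b)) (smul a (KP b)) k) ^ 2) with 0. exact R0.
    unfold ssub, smul, KP. rewrite H0. rewrite Cmod2. simpl. ring. }
  destruct (Req_dec (Cmod (b k)) 0) as [H1|H1].
  { apply Cmod_eq_0 in H1. replace (Cmod (ssub (KP (smul a b)) (smul a (KP b)) k) ^ 2) with 0. exact R0.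
    unfold ssub, smul, KP. rewrite H1. rewrite Cmod2. simpl. ring. }
  set (al := Cmod (a k) ^ 2). set (be := Cmod (b k) ^ 2).
  assert (Hal : 0 < al) by (unfold al; pose proof (Cmod_ge_0 (a k)); apply pow_lt; lra).
  assert (Hbe : 0 < be) by (unfold be; pose proof (Cmod_ge_0 (b k)); apply pow_lt; lra).
  assert (Hab : Cmod (smul a b k) ^ 2 = al * be) by (unfold smul, al, be; rewrite Cmod_mult; ring).
  assert (HP : 0 < P). { pose proof (term_le_N2 (smul a b) k (smul_l2 a b Ha Hb)). fold P in H. nra. }
  assert (HQ : 0 < Q). { pose proof (term_le_N2 b k Hb). fold Q be in H. lra. }
  assert (HA : al <= A ^ 2). { unfold al. apply pow_incr. split. apply Cmod_ge_0. apply linf_bound; auto. }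
  assert (HPQ : P <= A ^ 2 * Q) by (apply N2_smul_le; auto).
  pose proof (ptw_bound al P Q (A ^ 2) Hal HP HQ HA HPQ) as Hpt. fold Lm in Hpt.
  assert (E : Cmod (ssub (KP (smul a b)) (smul a (KP b)) k) ^ 2 =
     al * be * (2 * ln (al * be / P) - 2 * ln (be / Q)) ^ 2).
  { unfold ssub at 1. unfold KP at 1. fold P. rewrite Hab. unfold smul at 2. unfold KP. fold Q be.
    unfold al, be. rewrite !Cmod2. unfold smul. simpl. ring. }
  rewrite E, ln_ratio by auto. rewrite Hab. nra.
Qed.

Lemma KP_central : centralizer KP.
Proof.
  split. apply KP_hom. exists 6. split. lra. intros a b Ha Hb.
  pose proof (KP_pt a b) as Hpt. pose proof (linf_nonneg a Ha) as HA0.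
  set (A := linfnorm a) in *. set (P := N2 (smul a b)) in *. set (Q := N2 b) in *.
  set (Lm := ln (A ^ 2 * Q / P)) in *.
  set (d := ssub (KP (smul a b)) (smul a (KP b))).
  assert (Hab := smul_l2 a b Ha Hb).
  assert (Hg : ex_series (fun k => 16 * A ^ 2 * Cmod (b k) ^ 2 + 4 * Lm ^ 2 * Cmod (smul a b k) ^ 2))
    by (apply ex_series_comb; auto).
  assert (Hd : in_l2 d).
  { apply (ex_series_dom _ _) with (2 := Hg). intros k. split. apply pow2_ge_0. apply Hpt; auto. }
  split; auto.
  assert (HS : Series (fun k => Cmod (d k) ^ 2) <= 16 * A ^ 2 * Q + 4 * Lm ^ 2 * P).
  { eapply Rle_trans. apply Series_le with (2 := Hg). intros k; split. apply pow2_ge_0. apply Hpt; auto.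
    rewrite Series_plus. rewrite !Series_scal_l. unfold Q, P, N2. lra.
    apply (ex_series_scal_l (16 * A ^ 2) _ Hb). apply (ex_series_scal_l (4 * Lm ^ 2) _ Hab). }
  assert (HQ0 : 0 <= Q) by (apply N2_nonneg; auto).
  assert (HP0 : 0 <= P) by (apply N2_nonneg; auto).
  assert (HPQ : P <= A ^ 2 * Q) by (apply N2_smul_le; auto).
  assert (HL : 4 * Lm ^ 2 * P <= 16 * A ^ 2 * Q).
  { destruct (Req_dec P 0) as [h|h]. rewrite h. pose proof (pow2_ge_0 A). nra.
    pose proof (glob_bound P Q (A ^ 2) ltac:(lra) HPQ). fold Lm in H. nra. }
  assert (HS2 : Series (fun k => Cmod (d k) ^ 2) <= (6 * A) ^ 2 * Q).
  { pose proof (pow2_ge_0 A). nra. }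
  unfold l2norm. fold Q. eapply Rle_trans. apply sqrt_le_1_alt. exact HS2.
  rewrite sqrt_mult_alt by (apply pow2_ge_0). rewrite sqrt_pow2 by lra. right; reflexivity.
Qed.

Fixpoint csum (f : nat -> C) (n : nat) : C :=
  match n with O => RtoC 0 | S p => Cplus (csum f p) (f p) end.

Lemma csum_fst f n : fst (csum f n) = fsum (fun i => fst (f i)) n.
Proof. induction n; simpl; auto. rewrite IHn; auto. Qed.
Lemma csum_snd f n : snd (csum f n) = fsum (fun i => snd (f i)) n.
Proof. induction n; simpl; auto. rewrite IHn; auto. Qed.

Lemma csum_ext f g n : (forall k, (k < n)%nat -> f k = g k) -> csum f n = csum g n.
Proof. induction n; intros H; simpl. auto. rewrite IHn, H; auto. Qed.

Lemma Cmod2_R r : Cmod (RtoC r) ^ 2 = r ^ 2.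
Proof. rewrite Cmod2. simpl. ring. Qed.

Lemma step_id s w (sg : R) : sg * sg = 1 ->
  Cmod (Cplus s (Cmult (RtoC sg) w)) ^ 2 =
  Cmod s ^ 2 + Cmod w ^ 2 + 2 * sg * (fst s * fst w + snd s * snd w).
Proof.
  intros H. rewrite !Cmod2. simpl.
  transitivity (fst s ^ 2 + snd s ^ 2 + (fst w ^ 2 + snd w ^ 2) + 2 * sg * (fst s * fst w + snd s * snd w)
     + (sg * sg - 1) * (fst w ^ 2 + snd w ^ 2)). ring. rewrite H. ring.
Qed.

Lemma greedy (w : nat -> nat -> C) (n m : nat) : exists eps : nat -> R,
  (forall i, eps i = 1 \/ eps i = -1) /\
  fsum (fun i => fsum (fun k => Cmod (w i k) ^ 2) n) m <=
  fsum (fun k => Cmod (csum (fun i => Cmult (RtoC (eps i)) (w i k)) m) ^ 2) n.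
Proof.
  induction m.
  - exists (fun _ => 1). split. auto. simpl. apply fsum_nonneg. intros; apply pow2_ge_0.
  - destruct IHm as [eps [He IH]].
    set (S := fun k => csum (fun i => Cmult (RtoC (eps i)) (w i k)) m).
    set (t := fsum (fun k => fst (S k) * fst (w m k) + snd (S k) * snd (w m k)) n).
    set (sg := if Rle_dec 0 t then 1 else -1).
    assert (Hsg : sg * sg = 1) by (unfold sg; destruct (Rle_dec 0 t); ring).
    assert (Ht : 0 <= sg * t) by (unfold sg; destruct (Rle_dec 0 t); lra).
    exists (fun i => if Nat.eqb i m then sg else eps i). split.
    { intros i. destruct (Nat.eqb i m). unfold sg; destruct (Rle_dec 0 t); auto. auto. }
    simpl csum. rewrite Nat.eqb_refl.
    rewrite (fsum_ext (fun k => Cmod (Cplus (csum _ m) _) ^ 2)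
       (fun k => Cmod (S k) ^ 2 + Cmod (w m k) ^ 2 + 2 * sg * (fst (S k) * fst (w m k) + snd (S k) * snd (w m k)))).
    2: { intros k _. rewrite <- step_id by auto. f_equal. f_equal. f_equal. unfold S. apply csum_ext.
         intros i Hi. replace (Nat.eqb i m) with false; auto. symmetry; apply Nat.eqb_neq; lia. }
    rewrite !fsum_plus. cbn [fsum].
    rewrite (fsum_scal (2 * sg)). fold t. unfold S in *. nra.
Qed.

Lemma fin_l2 x N : (forall k, (N <= k)%nat -> x k = RtoC 0) ->
  in_l2 x /\ N2 x = fsum (fun k => Cmod (x k) ^ 2) N.
Proof.
  intros H. destruct (Series_fin (fun k => Cmod (x k) ^ 2) N) as [H1 H2].
  intros k Hk. rewrite H by auto. rewrite Cmod2_R. ring.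
  split; auto.
Qed.

Lemma bound_partial y K : in_l2 y -> l2norm y <= K -> forall n,
  fsum (fun k => Cmod (y k) ^ 2) n <= K ^ 2.
Proof.
  intros Hy HK n. unfold l2norm in HK.
  assert (H0 : 0 <= Series (fun k => Cmod (y k) ^ 2)) by (apply Series_nonneg; auto; intros; apply pow2_ge_0).
  eapply Rle_trans. apply fsum_le_Series; auto. intros; apply pow2_ge_0.
  rewrite <- (pow2_sqrt _ H0). pose proof (sqrt_pos (Series (fun k => Cmod (y k) ^ 2))).
  apply pow_incr. lra.
Qed.

Definition e (i : nat) : seqC := fun k => if Nat.eqb k i then RtoC 1 else RtoC 0.

Lemma e_fin i : in_l2 (e i) /\ N2 (e i) = 1.
Proof.
  destruct (fin_l2 (e i) (S i)) as [H1 H2].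
  { intros k Hk. unfold e. replace (Nat.eqb k i) with false; auto. symmetry; apply Nat.eqb_neq; lia. }
  split; auto. rewrite H2. clear. cbn [fsum]. unfold e at 2. rewrite Nat.eqb_refl, Cmod2_R.
  rewrite (fsum_ext _ (fun _ => 0)). rewrite fsum_const. ring.
  intros k Hk. unfold e. replace (Nat.eqb k i) with false. rewrite Cmod2_R; ring.
  symmetry; apply Nat.eqb_neq; lia.
Qed.

Lemma KP_e i k : KP (e i) k = RtoC 0.
Proof.
  unfold KP. rewrite (proj2 (e_fin i)). unfold e. destruct (Nat.eqb k i).
  rewrite Cmod2_R. replace (1 ^ 2 / 1) with 1 by field. rewrite ln_1. Ceq.
  Ceq.
Qed.

Lemma e_norm i : l2norm (e i) = 1.
Proof. change (sqrt (N2 (e i)) = 1). rewrite (proj2 (e_fin i)). apply sqrt_1. Qed.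

Lemma scal_l2 l x : in_l2 x -> in_l2 (sscal l x).
Proof.
  intros H. unfold in_l2. apply (ex_series_ext (fun k => Cmod l ^ 2 * Cmod (x k) ^ 2)).
  intros k. unfold sscal. rewrite Cmod_mult, Rpow_mult_distr. reflexivity.
  apply (ex_series_scal_l (Cmod l ^ 2) _ H).
Qed.

Lemma kron (eps : nat -> R) c n k : (k < n)%nat ->
  fsum (fun i => eps i * (if Nat.eqb i k then c else 0)) n = eps k * c.
Proof.
  induction n; intros Hk. lia. cbn [fsum].
  destruct (Nat.eq_dec k n).
  - subst. rewrite Nat.eqb_refl. rewrite (fsum_ext _ (fun _ => 0)). rewrite fsum_const. ring.
    intros i Hi. replace (Nat.eqb i n) with false. ring. symmetry; apply Nat.eqb_neq; lia.
  - rewrite IHn by lia. replace (Nat.eqb n k) with false. ring. symmetry; apply Nat.eqb_neq; lia.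
Qed.

Lemma KP_nontriv : ~ trivial_centralizer KP.
Proof.
  intros [L [[Ladd Lscal] [K HK]]].
  assert (HK0 : 0 <= K).
  { destruct (HK (e 0) (proj1 (e_fin 0))) as [_ h]. rewrite e_norm; lra.
    eapply Rle_trans. 2: exact h. apply sqrt_pos. }
  set (g := fun i => L (e i)).
  assert (Hg : forall i, Cmod (g i i) ^ 2 <= K ^ 2).
  { intros i. destruct (HK (e i) (proj1 (e_fin i))) as [Hy Hn]. rewrite e_norm; lra.
    pose proof (bound_partial _ _ Hy Hn (S i)) as H.
    eapply Rle_trans; [|exact H].
    replace (Cmod (g i i) ^ 2) with (Cmod (ssub (KP (e i)) (L (e i)) i) ^ 2).
    apply (fsum_term (fun k => Cmod (ssub (KP (e i)) (L (e i)) k) ^ 2)). intros; apply pow2_ge_0. lia.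
    unfold ssub. rewrite KP_e. unfold g. rewrite !Cmod2. simpl. ring. }
  destruct (INR_archimed 1 (exp K)) as [n Hn]. lra.
  pose proof (exp_pos K) as HeK.
  assert (Hn0 : 0 < INR n) by lra.
  assert (Hnn : (0 < n)%nat). { destruct n. simpl in Hn0; lra. lia. }
  assert (HlnK : K < ln (INR n)). { rewrite <- (ln_exp K). apply ln_increasing; lra. }
  set (c := 2 * ln (INR n)).
  set (w := fun i k => Cplus (RtoC (if Nat.eqb i k then c else 0)) (g i k)).
  destruct (greedy w n n) as [eps [Heps Hgr]].
  assert (Heps2 : forall i, eps i * eps i = 1) by (intros i; destruct (Heps i) as [h|h]; rewrite h; ring).
  set (s := sqrt (/ INR n)).
  assert (Hs2 : s ^ 2 = / INR n). { unfold s. apply pow2_sqrt. left; apply Rinv_0_lt_compat; auto. }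
  set (P := fun j k => if Nat.ltb k j then RtoC (s * eps k) else RtoC 0).
  assert (Hfin : forall j, in_l2 (P j) /\ N2 (P j) = fsum (fun k => Cmod (P j k) ^ 2) j).
  { intros j. apply fin_l2. intros k Hk. unfold P. replace (Nat.ltb k j) with false; auto.
    symmetry. apply Nat.ltb_ge. lia. }
  assert (HLP : forall j k, L (P j) k = csum (fun i => Cmult (RtoC (s * eps i)) (g i k)) j).
  { induction j; intros k.
    - assert (E0 : P 0%nat = sscal (RtoC 0) (P 0%nat)).
      { apply functional_extensionality; intro x. unfold sscal, P. simpl. Ceq. }
      rewrite E0 at 1. rewrite Lscal by (apply Hfin). simpl. Ceq.
    - assert (ES : P (S j) = sadd (P j) (sscal (RtoC (s * eps j)) (e j))).
      { apply functional_extensionality; intro x. unfold P, sadd, sscal, e.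
        destruct (Nat.ltb_spec x (S j)), (Nat.ltb_spec x j), (Nat.eqb_spec x j); try lia; try subst; Ceq. }
      rewrite ES, Ladd. rewrite Lscal. rewrite IHj. reflexivity.
      apply (proj1 (e_fin j)). apply Hfin. apply scal_l2, (proj1 (e_fin j)). }
  set (x := P n).
  assert (HN : N2 x = 1).
  { unfold x. rewrite (proj2 (Hfin n)). rewrite (fsum_ext _ (fun _ => s ^ 2)). rewrite fsum_const, Hs2.
    field. lra. intros k Hk. unfold P. replace (Nat.ltb k n) with true. rewrite Cmod2_R.
    rewrite Rpow_mult_distr. replace (eps k ^ 2) with 1. ring. rewrite <- (Heps2 k). ring.
    symmetry. apply Nat.ltb_lt. auto. }
  assert (Hxn : l2norm x <= 1). { change (sqrt (N2 x) <= 1). rewrite HN, sqrt_1. lra. }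
  destruct (HK x (proj1 (Hfin n)) Hxn) as [HD HDn].
  pose proof (bound_partial _ _ HD HDn n) as HB.
  set (Sk := fun k => csum (fun i => Cmult (RtoC (eps i)) (w i k)) n).
  assert (HDk : forall k, (k < n)%nat -> Cmod (ssub (KP x) (L x) k) ^ 2 = s ^ 2 * Cmod (Sk k) ^ 2).
  { intros k Hk. unfold ssub. unfold x at 2. rewrite HLP. unfold KP. rewrite HN.
    unfold x, P. replace (Nat.ltb k n) with true by (symmetry; apply Nat.ltb_lt; auto).
    rewrite Cmod2_R. replace ((s * eps k) ^ 2 / 1) with (/ INR n).
    2: { rewrite <- Hs2. replace ((s * eps k) ^ 2) with (s ^ 2 * (eps k * eps k)) by ring. rewrite Heps2. field. }
    rewrite ln_Rinv by auto.
    assert (F1 : fst (Sk k) = eps k * c + fsum (fun i => eps i * fst (g i k)) n).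
    { unfold Sk. rewrite csum_fst. rewrite <- (kron eps c n k Hk). rewrite <- fsum_plus.
      apply fsum_ext. intros i _. unfold w. simpl. ring. }
    assert (F2 : snd (Sk k) = fsum (fun i => eps i * snd (g i k)) n).
    { unfold Sk. rewrite csum_snd. apply fsum_ext. intros i _. unfold w. simpl. ring. }
    rewrite !Cmod2. rewrite F1, F2. simpl fst. simpl snd.
    rewrite csum_fst, csum_snd.
    rewrite (fsum_ext (fun i => fst (Cmult (RtoC (s * eps i)) (g i k))) (fun i => s * (eps i * fst (g i k)))).
    rewrite (fsum_ext (fun i => snd (Cmult (RtoC (s * eps i)) (g i k))) (fun i => s * (eps i * snd (g i k)))).
    rewrite !fsum_scal. unfold c. ring.
    intros; simpl; ring. intros; simpl; ring. }
  assert (Hup : s ^ 2 * fsum (fun k => Cmod (Sk k) ^ 2) n <= K ^ 2).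
  { rewrite <- fsum_scal. rewrite <- (fsum_ext (fun k => Cmod (ssub (KP x) (L x) k) ^ 2)). exact HB.
    intros; apply HDk; auto. }
  assert (Hlow : INR n * (c - K) ^ 2 <= fsum (fun i => fsum (fun k => Cmod (w i k) ^ 2) n) n).
  { rewrite <- fsum_const. apply fsum_le. intros i Hi.
    eapply Rle_trans. 2: apply (fsum_term (fun k => Cmod (w i k) ^ 2) n i); auto.
    2: intros; apply pow2_ge_0.
    pose proof (Hg i) as Hgi. rewrite Cmod2 in Hgi |- *. unfold w. simpl fst; simpl snd.
    rewrite Nat.eqb_refl.
    assert (-K <= fst (g i i)) by nra.
    assert (K <= c) by (unfold c; lra).
    assert (0 <= c - K) by lra.
    assert (c - K <= c + fst (g i i)) by lra.
    assert ((c - K) ^ 2 <= (c + fst (g i i)) ^ 2) by (apply pow_incr; lra).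
    pose proof (pow2_ge_0 (snd (g i i))). lra. }
  assert (Hmid : INR n * (c - K) ^ 2 <= K ^ 2 * INR n).
  { assert (fsum (fun k => Cmod (Sk k) ^ 2) n <= K ^ 2 * INR n).
    { rewrite Hs2 in Hup. apply Rmult_le_reg_l with (/ INR n). apply Rinv_0_lt_compat; auto.
      replace (/ INR n * (K ^ 2 * INR n)) with (K ^ 2) by (field; lra). exact Hup. }
    unfold Sk in H. lra. }
  assert (Hfin2 : (c - K) ^ 2 <= K ^ 2) by nra.
  assert (K < c - K) by (unfold c; lra).
  nra.
Qed.

Fixpoint mfix (d : R) (n : nat) : nat :=
  match n with O => O | S p => if Rle_dec (INR (S p)) d then S p else mfix d p end.

Lemma mfix_le d n : (mfix d n <= n)%nat.
Proof. induction n; simpl. lia. destruct (Rle_dec _ d); lia. Qed.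

Lemma mfix_val d n : INR (mfix d n) <= d \/ mfix d n = 0%nat.
Proof. induction n. right; reflexivity. cbn [mfix]. destruct (Rle_dec (INR (S n)) d); auto. Qed.

Lemma mfix_max d n j : (j <= n)%nat -> INR j <= d -> (j <= mfix d n)%nat.
Proof.
  induction n; intros Hj Hd. cbn [mfix]. lia. cbn [mfix].
  destruct (Rle_dec (INR (S n)) d). auto.
  destruct (Nat.eq_dec j (S n)). subst; lra. apply IHn; auto; lia.
Qed.

Theorem proposition5p7 :
  forall delta : nat -> R,
    (forall n, (1 <= n)%nat -> 1 < delta n) ->
    is_lim_seq delta p_infty ->
    exists (Om : seqC -> seqC) (kappa : nat -> R) (a : nat -> seqC),
      nontrivial_centralizer Om /\
      (forall n, (1 <= n)%nat -> 0 < kappa n /\ kappa n <= delta n) /\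
      is_lim_seq kappa p_infty /\
      (forall n, (1 <= n)%nat ->
         in_l2 (a n) /\
         (exists k, a n k <> RtoC 0) /\
         (forall k, (n <= k)%nat -> a n k = RtoC 0) /\
         (forall k, Om (a n) k = Cmult (RtoC (-2 * ln (kappa n))) (a n k))).
Proof.
  intros delta Hd Hlim.
  set (m := fun n => mfix (delta n) n).
  assert (Hm1 : forall n, (1 <= n)%nat -> (1 <= m n)%nat).
  { intros n Hn. apply mfix_max; auto. simpl. specialize (Hd n Hn). lra. }
  exists KP, (fun n => INR (m n)), (fun n k => if Nat.ltb k (m n) then RtoC 1 else RtoC 0).
  split. { split. apply KP_central. apply KP_nontriv. }
  split.
  { intros n Hn. pose proof (Hm1 n Hn). split. apply lt_0_INR; lia.
    destruct (mfix_val (delta n) n) as [h|h]. exact h. unfold m in H. lia. }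
  split.
  { apply is_lim_seq_spec. intros M.
    destruct (INR_archimed 1 M) as [j Hj]. lra.
    apply is_lim_seq_spec in Hlim. destruct (Hlim (INR j)) as [N1 HN1].
    exists (max N1 j). intros n Hn.
    assert (j <= m n)%nat. { apply mfix_max. lia. left. apply HN1. lia. }
    apply le_INR in H. lra. }
  intros n Hn. pose proof (Hm1 n Hn) as Hmn. pose proof (mfix_le (delta n) n) as Hmle. fold (m n) in Hmle.
  set (an := fun k => if Nat.ltb k (m n) then RtoC 1 else RtoC 0).
  assert (Hfa : forall k, (m n <= k)%nat -> an k = RtoC 0).
  { intros k Hk. unfold an. replace (Nat.ltb k (m n)) with false; auto. symmetry; apply Nat.ltb_ge; auto. }
  destruct (fin_l2 an (m n) Hfa) as [Hl2 HN].
  split. exact Hl2.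
  split. { exists 0%nat. unfold an. replace (Nat.ltb 0 (m n)) with true.
    intros E. apply (f_equal fst) in E. simpl in E. lra. symmetry; apply Nat.ltb_lt; lia. }
  split. { intros k Hk. apply Hfa. lia. }
  intros k. fold an. unfold KP. rewrite HN.
  rewrite (fsum_ext _ (fun _ => 1)). rewrite fsum_const, Rmult_1_r.
  2: { intros i Hi. unfold an. replace (Nat.ltb i (m n)) with true. rewrite Cmod2_R. ring.
       symmetry; apply Nat.ltb_lt; auto. }
  unfold an. destruct (Nat.ltb k (m n)).
  - rewrite Cmod2_R. replace (1 ^ 2 / INR (m n)) with (/ INR (m n)) by (field; apply not_0_INR; lia).
    rewrite ln_Rinv by (apply lt_0_INR; lia). Ceq.
  - Ceq.
Qed.
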